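(* For every graph $G$ and integer $m\ge 1$, the generalised windmill $W^{(m)}_G=K_1+\bigcup_{i=1}^m G_i$, where $G_1,\dots,G_m$ are vertex-disjoint copies of $G$, satisfies $f^-(W^{(m)}_G)=m\cdot f^-(G)$ and $f^+(W^{(m)}_G)=m\cdot f^+(G)$.
   Context: All graphs are finite, simple, undirected and connected. $N[v]=N(v)\cup\{v\}$ is the closed neighbourhood. A chromatic colouring of $G$ is a proper vertex colouring $c:V(G)\to\{c_1,\dots,c_{\chi(G)}\}$. With respect to $c$, a vertex $v$ yields a rainbow neighbourhood if $N[v]$ contains a vertex of each colour $c_1,\dots,c_{\chi(G)}$; $r_\chi(G)$ is the number of such vertices, and $r^-_\chi(G)$, $r^+_\chi(G)$ are its minimum and maximum over all chromatic colourings of $G$. Fading: for a set $F\subseteq V(G)$ (a fade set), the vertices of $F$ receive a transparent colour $c^\circ$ not among $c_1,\dots,c_{\chi(G)}$; after fading, $v$ yields a rainbow neighbourhood iff for every $i$ some vertex of $N[v]\setminus F$ has colour $c_i$. The fading number $f^-(G)$ is the maximum $|F|$ over chromatic colourings $c$ attaining $r_\chi=r^-_\chi(G)$ and fade sets $F$ such that, after fading $F$, the number of vertices yielding rainbow neighbourhoods is still $r^-_\chi(G)$; $f^+(G)$ is defined analogously with $r^+_\chi(G)$. The join $G_1+G_2$ of vertex-disjoint graphs is $G_1\cup G_2$ together with all edges joining a vertex of $G_1$ to a vertex of $G_2$. *)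

(* Defs.v *)
(* Graphs: finite type T with a symmetric irreflexive relation e. *)
From mathcomp Require Import all_boot.
Set Implicit Arguments. Unset Strict Implicit. Unset Printing Implicit Defensive.

Section Defs.
Variables (T : finType) (e : rel T).

Definition proper_col (k : nat) (c : T -> 'I_k) : bool :=
  [forall x, forall y, e x y ==> (c x != c y)].

(* chromatic number: least k admitting a proper k-colouring
   (default #|T|, which is always achievable) *)
Definition chi : nat :=
  \big[minn/#|T|]_(k < #|T|.+1 | [exists c : {ffun T -> 'I_k}, proper_col c]) k.

Definition cnbhd (v : T) : {set T} := [set u | (u == v) || e v u].

Definition rainbowF (c : T -> 'I_chi) (F : {set T}) (v : T) : bool :=
  [forall i : 'I_chi, exists u, [&& u \in cnbhd v, u \notin F & c u == i]].

Definition rcount (c : T -> 'I_chi) (F : {set T}) : nat :=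
  #|[set v | rainbowF c F v]|.

(* r_chi(G) for colouring c is rcount c set0; chromatic colourings are the
   proper colourings with chi colours *)
Definition r_minus : nat :=
  \big[minn/#|T|]_(c : {ffun T -> 'I_chi} | proper_col c) rcount c set0.
Definition r_plus : nat :=
  \big[maxn/0]_(c : {ffun T -> 'I_chi} | proper_col c) rcount c set0.

Definition f_minus : nat :=
  \big[maxn/0]_(c : {ffun T -> 'I_chi} | proper_col c && (rcount c set0 == r_minus))
    \big[maxn/0]_(F : {set T} | rcount c F == r_minus) #|F|.
Definition f_plus : nat :=
  \big[maxn/0]_(c : {ffun T -> 'I_chi} | proper_col c && (rcount c set0 == r_plus))
    \big[maxn/0]_(F : {set T} | rcount c F == r_plus) #|F|.

End Defs.

(* Generalised windmill K_1 + (G_1 u ... u G_m): None is the K_1 vertex,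
   Some (i, x) is vertex x of the i-th copy. *)
Definition windmill_rel (m : nat) {T : finType} (e : rel T) : rel (option ('I_m * T)) :=
  fun u v => match u, v with
  | None, None => false
  | None, Some _ => true
  | Some _, None => true
  | Some (i, x), Some (j, y) => (i == j) && e x y
  end.
Arguments windmill_rel m {T} e.

(* Main.v *)
Require Import Defs.
From mathcomp Require Import all_boot.
From mathcomp Require Import zify.
Set Implicit Arguments. Unset Strict Implicit. Unset Printing Implicit Defensive.

Lemma bigmin_le (I : finType) (P : pred I) (F : I -> nat) d i :
  P i -> \big[minn/d]_(j | P j) F j <= F i.
Proof.
move=> Pi; have : i \in index_enum I by rewrite mem_index_enum.
elim: (index_enum I) => [|j s IH] //; rewrite inE big_cons.
case/orP=> [/eqP<-|/IH]; first by rewrite Pi geq_minl.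
by case: (P j) => // H; rewrite geq_min H orbT.
Qed.

Lemma bigmin_led (I : finType) (P : pred I) (F : I -> nat) d :
  \big[minn/d]_(j | P j) F j <= d.
Proof.
rewrite unlock /reducebig; elim: (index_enum I) => [|j s IH] //=.
by case: (P j) => //; rewrite geq_min IH orbT.
Qed.

Lemma bigmin_att (I : finType) (P : pred I) (F : I -> nat) d i0 :
  P i0 -> (forall i, P i -> F i <= d) ->
  exists2 i, P i & \big[minn/d]_(j | P j) F j = F i.
Proof.
move=> P0 Hd.
have : \big[minn/d]_(j | P j) F j = d \/ exists2 i, P i & \big[minn/d]_(j | P j) F j = F i.
  apply: (big_ind (fun v => v = d \/ exists2 i, P i & v = F i)); first by left.
    move=> x y Hx Hy; case/orP: (leq_total x y) => h;
    [rewrite (minn_idPl h) | rewrite (minn_idPr h)]; assumption.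
  by move=> i Pi; right; exists i.
case=> // H; exists i0 => //; apply/eqP; rewrite eqn_leq bigmin_le //=.
by rewrite H Hd.
Qed.

Lemma bigmax_att (I : finType) (P : pred I) (F : I -> nat) i0 :
  P i0 -> exists2 i, P i & \big[maxn/0]_(j | P j) F j = F i.
Proof.
move=> P0.
have : \big[maxn/0]_(j | P j) F j = 0 \/ exists2 i, P i & \big[maxn/0]_(j | P j) F j = F i.
  apply: (big_ind (fun v => v = 0 \/ exists2 i, P i & v = F i)); first by left.
    move=> x y Hx Hy; case/orP: (leq_total x y) => h;
    [rewrite (maxn_idPr h) | rewrite (maxn_idPl h)]; assumption.
  by move=> i Pi; right; exists i.
case=> // H; exists i0 => //; apply/eqP; rewrite eqn_leq (@leq_bigmax_cond _ _ F _ P0) andbT.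
by rewrite H.
Qed.

Lemma sum_const_ord m r : \sum_(i < m) r = m * r.
Proof. by rewrite big_const_ord iter_addn_0 mulnC. Qed.

Lemma sum_eq_le m (a : 'I_m -> nat) r :
  (forall i, a i <= r) -> m * r <= \sum_(i < m) a i -> forall i, a i = r.
Proof.
move=> H1 H2 i.
have Hl : forall j : 'I_m, xpredT j -> a j <= r ?= iff (a j == r).
  by move=> j _; split; [exact: H1| by []].
have [_] := @leqif_sum _ xpredT (fun i => a i == r) a (fun _ => r) Hl.
rewrite sum_const_ord.
have -> : (\sum_(i < m) a i == m * r) = true.
  apply/eqP/anti_leq/andP; split; last exact: H2.
  by rewrite -sum_const_ord; apply: leq_sum => j _; exact: H1.
by move/esym/forallP/(_ i)/eqP.
Qed.

Lemma sum_eq_ge m (a : 'I_m -> nat) r :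
  (forall i, r <= a i) -> \sum_(i < m) a i <= m * r -> forall i, a i = r.
Proof.
move=> H1 H2 i.
have Hl : forall j : 'I_m, xpredT j -> r <= a j ?= iff (r == a j).
  by move=> j _; split; [exact: H1| by []].
have [_] := @leqif_sum _ xpredT (fun i => r == a i) (fun _ => r) a Hl.
rewrite sum_const_ord.
have -> : (m * r == \sum_(i < m) a i) = true.
  apply/eqP/anti_leq/andP; split; last exact: H2.
  by rewrite -sum_const_ord; apply: leq_sum => j _; exact: H1.
by move/esym/forallP/(_ i)/eqP.
Qed.

Lemma card_opt (X : finType) (P : pred (option X)) :
  #|[set w | P w]| = P None + \sum_(x : X) P (Some x).
Proof.
rewrite -sum1_card big_mkcond /= (bigD1 None) //=.
rewrite (reindex_omap Some id) /=; last by case=> [x _|].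
rewrite inE; congr (_ + _).
by apply: eq_big => [x|x _]; rewrite ?eqxx // inE; case: (P (Some x)).
Qed.

Lemma sum_pair (m : nat) (X : finType) (g : 'I_m * X -> nat) :
  \sum_(p : 'I_m * X) g p = \sum_(i < m) \sum_(x : X) g (i, x).
Proof. by rewrite pair_big; apply: eq_big => [[]|[]]. Qed.

Lemma card_set_sum (X : finType) (P : pred X) : #|[set x | P x]| = \sum_x P x.
Proof. by rewrite -sum1_card big_mkcond /=; apply: eq_bigr => x _; rewrite inE; case: (P x). Qed.

Section G.
Variables (T : finType) (e : rel T).

Definition rbK k (c : T -> 'I_k) (F : {set T}) v :=
  [forall i : 'I_k, exists u, [&& u \in cnbhd e v, u \notin F & c u == i]].
Definition rcK k (c : T -> 'I_k) F := #|[set v | rbK c F v]|.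
Definition rminK k := \big[minn/#|T|]_(c : {ffun T -> 'I_k} | proper_col e c) rcK c set0.
Definition rmaxK k := \big[maxn/0]_(c : {ffun T -> 'I_k} | proper_col e c) rcK c set0.
Definition fK k r := \big[maxn/0]_(c : {ffun T -> 'I_k} | proper_col e c && (rcK c set0 == r))
    \big[maxn/0]_(F : {set T} | rcK c F == r) #|F|.

Lemma f_minusE : f_minus e = fK (chi e) (rminK (chi e)). Proof. by []. Qed.
Lemma f_plusE : f_plus e = fK (chi e) (rmaxK (chi e)). Proof. by []. Qed.

Lemma rcK_ext k (c c' : T -> 'I_k) F : c =1 c' -> rcK c F = rcK c' F.
Proof.
move=> H; rewrite /rcK; apply: eq_card => v; rewrite !inE /rbK.
by apply: eq_forallb => i; apply: eq_existsb => u; rewrite H.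
Qed.

Lemma proper_ext k (c c' : T -> 'I_k) : c =1 c' -> proper_col e c = proper_col e c'.
Proof. by move=> H; rewrite /proper_col; apply: eq_forallb => x; apply: eq_forallb => y; rewrite !H. Qed.

Lemma propP k (c : T -> 'I_k) : reflect (forall x y, e x y -> c x != c y) (proper_col e c).
Proof.
apply: (iffP forallP) => [H x y exy|H x]; first by move/forallP: (H x) => /(_ y)/implyP; apply.
by apply/forallP => y; apply/implyP; apply: H.
Qed.

Lemma rcK_le k (c : T -> 'I_k) F : rcK c F <= #|T|.
Proof. exact: max_card. Qed.

Lemma rcK_mono k (c : T -> 'I_k) F : rcK c F <= rcK c set0.
Proof.
apply: subset_leq_card; apply/subsetP => v; rewrite !inE /rbK => /forallP H.
apply/forallP => i; case/existsP: (H i) => u /and3P[a b c']; apply/existsP; exists u.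
by rewrite a c' inE.
Qed.

Lemma chi_le_card : chi e <= #|T|.
Proof. exact: bigmin_led. Qed.

Lemma chi_min_nat k (c : T -> nat) : (forall x, c x < k) ->
  (forall x y, e x y -> c x != c y) -> chi e <= k.
Proof.
move=> Hk Hp; case: (leqP k #|T|) => hk; last by apply: leq_trans chi_le_card (ltnW hk).
have hk' : k < #|T|.+1 by [].
apply: (@bigmin_le _ _ (fun i : 'I_#|T|.+1 => nat_of_ord i) _ (Ordinal hk')) => /=.
apply/existsP; exists [ffun x => Ordinal (Hk x)]; apply/propP => x y exy.
by rewrite !ffunE; apply: Hp.
Qed.

Lemma chi_min k (c : T -> 'I_k) : proper_col e c -> chi e <= k.
Proof.
move/propP=> Hp; apply: (@chi_min_nat k (fun x => nat_of_ord (c x))) => // x y /Hp.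
Qed.

Lemma chi_ex : irreflexive e -> exists c : {ffun T -> 'I_(chi e)}, proper_col e c.
Proof.
move=> irr; rewrite /chi.
have P0 : [exists c : {ffun T -> 'I_(@ord_max #|T|)}, proper_col e c].
  apply/existsP; exists [ffun x => enum_rank x]; apply/propP => x y exy.
  rewrite !ffunE; apply: contraL exy => /eqP/enum_rank_inj ->; by rewrite irr.
have [i Pi ->] := @bigmin_att _ (fun k : 'I_#|T|.+1 => [exists c : {ffun T -> 'I_k}, proper_col e c])
   (fun i => nat_of_ord i) #|T| _ P0 (fun i _ => leq_ord i).
by case/existsP: Pi => c Hc; exists c.
Qed.

End G.

Lemma rainbow_ex (T : finType) (e : rel T) : symmetric e ->
  forall k (c : T -> 'I_k), proper_col e c -> chi e = k -> forall x0 : T,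
  exists v, rbK e c set0 v.
Proof.
move=> sym k c /propP Hp Hk x0.
case: (boolP [exists v, rbK e c set0 v]) => [/existsP//|].
rewrite negb_exists => /forallP Hn.
exfalso; move: c Hp Hn Hk; case: k => [c|n' c Hp Hn Hk]; first by case: (c x0).
pose t := @ord_max n'.
pose miss v := [pick i : 'I_n'.+1 | [forall u, ~~ [&& u \in cnbhd e v, u \notin set0 & c u == i]]].
have Fm : forall v, c v == t -> exists i, [/\ miss v = Some i, i < n' &
    forall u, u \in cnbhd e v -> c u != i].
  move=> v /eqP cv; rewrite /miss; case: pickP => [i /forallP Hi|H0].
    exists i; split=> //.
      have := Hi v; rewrite !inE eqxx /= cv => ne.
      have := ltn_ord i; have : nat_of_ord i != n' by apply: contra ne => /eqP h; apply/eqP/val_inj.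
      lia.
    move=> u hu; have := Hi u; by rewrite hu inE.
  have := Hn v; rewrite /rbK negb_forall => /existsP[i]; rewrite negb_exists => Hi.
  by have := H0 i; rewrite Hi.
pose c' v := if c v == t then (if miss v is Some i then nat_of_ord i else 0) else nat_of_ord (c v).
have : chi e <= n'.
  apply: (@chi_min_nat _ _ n' c').
    move=> v; rewrite /c'; case: ifP => [/Fm[i [-> //]]|/negbT ne].
    have := ltn_ord (c v); have : nat_of_ord (c v) != n' by apply: contra ne => /eqP h; apply/eqP/val_inj.
    lia.
  move=> x y exy; rewrite /c'.
  case: ifP => [hx|/negbT hx]; case: ifP => [hy|/negbT hy].
  - by have := Hp _ _ exy; rewrite (eqP hx) (eqP hy) eqxx.
  - have [i [-> _ Hi]] := Fm x hx.
    have := Hi y; rewrite inE exy orbT => /(_ isT).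
    by apply: contra => /eqP h; apply/eqP/val_inj.
  - have [i [-> _ Hi]] := Fm y hy.
    have := Hi x; rewrite inE sym exy orbT => /(_ isT).
    by apply: contra => /eqP h; apply/eqP/val_inj.
  - by have := Hp _ _ exy; apply: contra => /eqP h; apply/eqP/val_inj.
by rewrite Hk ltnn.
Qed.

Section W.
Variables (T : finType) (e : rel T) (m n : nat).
Local Notation W := (option ('I_m * T)).
Local Notation eW := (windmill_rel m e).

Definition Fi (FW : {set W}) i := [set x | Some (i, x) \in FW].

Variables (d : W -> 'I_n.+1) (c : 'I_m -> T -> 'I_n).
Hypothesis hd : forall i x, d (Some (i, x)) = lift (d None) (c i x).

Lemma L2' (FW : {set W}) : None \in FW -> forall w, rbK eW d FW w = false.
Proof.
move=> hN w; apply/negP => /forallP /(_ (d None)) /existsP [u /and3P[_ hu /eqP du]].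
case: u hu du => [[i x]|] hu du; last by rewrite hN in hu.
by move: du; rewrite hd => /esym/eqP; rewrite (negbTE (neq_lift _ _)).
Qed.

Lemma L1 (FW : {set W}) i x : None \notin FW ->
  rbK eW d FW (Some (i, x)) = rbK e (c i) (Fi FW i) x.
Proof.
move=> hN; apply/forallP/forallP => H j.
  case/existsP: (H (lift (d None) j)) => u /and3P[hu hf hc].
  case: u hu hf hc => [[i' y]|] hu hf hc; last first.
    by move: hc; rewrite (negbTE (neq_lift _ _)).
  move: hc; rewrite hd => /eqP/lift_inj hc.
  have ii : i' = i.
    move: hu; rewrite inE => /orP[/eqP[->]//|/= /andP[/eqP->]//].
  subst i'; apply/existsP; exists y; rewrite hc eqxx andbT !inE hf andbT.
  move: hu; rewrite inE => /orP[/eqP[->]|/= /andP[_ ->]]; by rewrite ?eqxx ?orbT.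
case: (unliftP (d None) j) => [j' ->|->].
  case/existsP: (H j') => y /and3P[hy hf hc]; apply/existsP; exists (Some (i, y)).
  rewrite hd (eqP hc) eqxx andbT; move: hf; rewrite inE => ->; rewrite andbT inE.
  move: hy; rewrite inE => /orP[/eqP->|hy]; first by rewrite eqxx.
  by rewrite /= eqxx hy orbT.
apply/existsP; exists None; by rewrite hN eqxx !inE /=.
Qed.

Lemma L2 (FW : {set W}) : None \notin FW ->
  (forall j : 'I_n, exists i y, y \notin Fi FW i /\ c i y = j) -> rbK eW d FW None.
Proof.
move=> hN H; apply/forallP => j; case: (unliftP (d None) j) => [j' ->|->].
  have [i [y [hy hc]]] := H j'; apply/existsP; exists (Some (i, y)).
  by move: hy; rewrite !inE hd hc eqxx /= => ->.
apply/existsP; exists None; rewrite hN !inE /=; exact/eqP.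
Qed.

Lemma L3 (FW : {set W}) : None \notin FW ->
  rcK eW d FW = rbK eW d FW None + \sum_(i < m) rcK e (c i) (Fi FW i).
Proof.
move=> hN; rewrite /rcK card_opt sum_pair; congr (_ + _).
apply: eq_bigr => i _; rewrite card_set_sum; apply: eq_bigr => x _.
by rewrite L1.
Qed.

End W.

Lemma cardW (T : finType) m (FW : {set option ('I_m * T)}) : None \notin FW ->
  #|FW| = \sum_(i < m) #|Fi FW i|.
Proof.
move=> hN; have -> : FW = [set w | w \in FW] by apply/setP => w; rewrite inE.
rewrite card_opt (negbTE hN) sum_pair; apply: eq_bigr => i _.
by rewrite /Fi card_set_sum; apply: eq_bigr => x _; rewrite inE.
Qed.

Section X.
Variables (T : finType) (e : rel T) (m n : nat).
Local Notation W := (option ('I_m * T)).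
Local Notation eW := (windmill_rel m e).

Definition cof (d : W -> 'I_n.+1) (cdef : T -> 'I_n) i x :=
  odflt (cdef x) (unlift (d None) (d (Some (i, x)))).

Lemma cof_spec d cdef : proper_col eW d ->
  forall i x, d (Some (i, x)) = lift (d None) (cof d cdef i x).
Proof.
move/propP=> Hp i x; rewrite /cof; case: unliftP => [j ->|h] //.
by have := Hp None (Some (i, x)) isT; rewrite h eqxx.
Qed.

Lemma cof_proper d cdef i : proper_col eW d -> proper_col e (cof d cdef i).
Proof.
move=> hp; have hs := cof_spec cdef hp; move/propP: hp => Hp.
apply/propP => x y exy; have := Hp (Some (i, x)) (Some (i, y)); rewrite /= eqxx exy.
by rewrite !hs => /(_ isT); apply: contra => /eqP ->.
Qed.

Definition dC (cG : T -> 'I_n) (w : W) : 'I_n.+1 :=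
  match w with None => ord_max | Some (_, x) => lift ord_max (cG x) end.

Lemma dC_spec cG i x : dC cG (Some (i, x)) = lift (dC cG None) (cG x).
Proof. by []. Qed.

Lemma dC_proper cG : proper_col e cG -> proper_col eW (dC cG).
Proof.
move/propP=> Hp; apply/propP => [[[i x]|] [[j y]|]] //= h.
- case/andP: h => _ /Hp; by apply: contra => /eqP/lift_inj ->.
- by rewrite eq_sym neq_lift.
- by rewrite neq_lift.
Qed.

Definition FC (FG : {set T}) : {set W} := [set w | if w is Some (_, x) then x \in FG else false].

Lemma FC_None FG : None \notin FC FG. Proof. by rewrite inE. Qed.
Lemma FC_Fi FG i : Fi (FC FG) i = FG. Proof. by apply/setP => x; rewrite !inE. Qed.

End X.

Section M.
Variables (T : finType) (e : rel T) (m : nat).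
Hypotheses (sym : symmetric e) (irr : irreflexive e) (m0 : 0 < m).
Local Notation W := (option ('I_m * T)).
Local Notation eW := (windmill_rel m e).
Local Notation n := (chi e).
Variable cdef : T -> 'I_n.
Hypothesis cdefP : proper_col e cdef.

Lemma irrW : irreflexive eW.
Proof. by case=> [[i x]|] //=; rewrite irr andbF. Qed.

Lemma center_gen (d : W -> 'I_n.+1) (c : 'I_m -> T -> 'I_n)
  (hd : forall i x, d (Some (i, x)) = lift (d None) (c i x)) (FW : {set W}) :
  None \notin FW -> (#|T| = 0 \/ exists i v, rbK e (c i) (Fi FW i) v) -> rbK eW d FW None.
Proof.
move=> hN H; apply: (L2 e hd hN) => j.
case: H => [h0|[i [v /forallP Hv]]].
  by exfalso; have := ltn_ord j; have := chi_le_card e; rewrite h0; lia.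
case/existsP: (Hv j) => u /and3P[_ hu hc]; exists i, u; split => //; exact/eqP.
Qed.

Lemma Fi0 i : Fi (set0 : {set W}) i = set0.
Proof. by apply/setP => x; rewrite !inE. Qed.

Lemma T0_or : #|T| = 0 \/ exists x0 : T, true.
Proof. case: (posnP #|T|) => [->|/card_gt0P [x _]]; by [left | right; exists x]. Qed.

Lemma decomp0 (d : W -> 'I_n.+1) : proper_col eW d ->
  rcK eW d set0 = 1 + \sum_(i < m) rcK e (cof d cdef i) set0.
Proof.
move=> hp; have hd := cof_spec cdef hp.
rewrite (L3 e hd (negbT (in_set0 None))); congr (_ + _).
  rewrite (@center_gen d (cof d cdef) hd) ?in_set0 //.
  case: T0_or => [->|[x0 _]]; first by left.
  right; exists (Ordinal m0).
  have [v hv] := @rainbow_ex T e sym _ _ (cof_proper cdef (Ordinal m0) hp) erefl x0.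
  by exists v; rewrite Fi0.
by apply: eq_bigr => i _; rewrite Fi0.
Qed.

Lemma decompC (cG : T -> 'I_n) FG : proper_col e cG -> rcK e cG FG = rcK e cG set0 ->
  rcK eW (dC (m:=m) cG) (FC m FG) = 1 + m * rcK e cG FG.
Proof.
move=> hp heq; have hd := @dC_spec T m _ cG.
rewrite (L3 e hd (FC_None _ _)); congr (_ + _).
  rewrite (@center_gen (dC (m:=m) cG) (fun _ => cG) hd) ?FC_None //.
  case: T0_or => [->|[x0 _]]; first by left.
  right; exists (Ordinal m0).
  have [v hv] := @rainbow_ex T e sym _ _ hp erefl x0.
  have : 0 < rcK e cG FG.
    by rewrite heq; apply/card_gt0P; exists v; rewrite inE.
  case/card_gt0P => w; rewrite inE => hw; exists w; by rewrite FC_Fi.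
by rewrite -sum_const_ord; apply: eq_bigr => i _; rewrite FC_Fi.
Qed.

Lemma FC0 : FC m (set0 : {set T}) = set0.
Proof. by apply/setP => [[[i x]|]]; rewrite !inE. Qed.

Lemma decompC0 (cG : T -> 'I_n) : proper_col e cG ->
  rcK eW (dC (m:=m) cG) set0 = 1 + m * rcK e cG set0.
Proof. by move=> hp; rewrite -FC0 decompC. Qed.

Lemma assemble (rG rW : nat) :
  (exists cG : {ffun T -> 'I_n}, proper_col e cG /\ rcK e cG set0 = rG) ->
  rW = 1 + m * rG ->
  (forall d : {ffun W -> 'I_n.+1}, proper_col eW d -> rcK eW d set0 = rW ->
      forall i, rcK e (cof d cdef i) set0 = rG) ->
  fK eW n.+1 rW = m * fK e n rG.
Proof.
move=> [cG [hcG hcG0]] HW H2.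
apply/eqP; rewrite eqn_leq; apply/andP; split.
  apply/bigmax_leqP => d /andP[hp /eqP h0]; apply/bigmax_leqP => FW /eqP hF.
  set c := cof d cdef; have hd := cof_spec cdef hp.
  have hN : None \notin FW.
    apply/negP => hN.
    have : rcK eW d FW = 0.
      rewrite /rcK; apply/eqP; rewrite cards_eq0; apply/eqP/setP => w.
      by rewrite !inE (L2' e hd hN).
    by rewrite hF HW.
  have hc := H2 d hp h0.
  have L := L3 e hd hN; rewrite hF HW in L.
  have each : forall i, rcK e (c i) (Fi FW i) = rG.
    apply: sum_eq_le => [i|]; first by rewrite -(hc i); apply: rcK_mono.
    move: L; rewrite /c; case: (rbK eW d FW None) => /=; lia.
  rewrite cardW // -sum_const_ord; apply: leq_sum => i _.
  have hpi : proper_col e [ffun x => c i x].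
    by rewrite (proper_ext e (ffunE _)); apply: cof_proper.
  have hce : forall F, rcK e [ffun x => c i x] F = rcK e (c i) F.
    by move=> F; apply: rcK_ext => x; rewrite ffunE.
  apply: leq_trans (@leq_bigmax_cond _ _ _ [ffun x => c i x] _).
    by apply: (@leq_bigmax_cond _ (fun F => rcK e [ffun x => c i x] F == rG) (fun F => #|F|)); rewrite hce each.
  by rewrite hpi hce hc /=.
have [cG' /andP[hp' /eqP h0'] ->] : exists2 c : {ffun T -> 'I_n}, proper_col e c && (rcK e c set0 == rG) &
    fK e n rG = \big[maxn/0]_(F : {set T} | rcK e c F == rG) #|F|.
  exact: (@bigmax_att _ (fun c : {ffun T -> 'I_n} => proper_col e c && (rcK e c set0 == rG)) (fun c : {ffun T -> 'I_n} => \big[maxn/0]_(F : {set T} | rcK e c F == rG) #|F|) cG (introT andP (conj hcG (introT eqP hcG0)))).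
have [FG /eqP hFG ->] := @bigmax_att _ (fun F => rcK e cG' F == rG) (fun F => #|F|) set0 (introT eqP h0').
pose d := [ffun w => dC (m:=m) cG' w].
have hde : forall F, rcK eW d F = rcK eW (dC (m:=m) cG') F.
  by move=> F; apply: rcK_ext => x; rewrite ffunE.
have hpd : proper_col eW d by rewrite (proper_ext eW (ffunE _)); apply: dC_proper.
apply: leq_trans (@leq_bigmax_cond _ _ _ d _); last first.
  by rewrite hpd hde decompC0 // h0' HW /=.
have -> : m * #|FG| = #|FC m FG|.
  by rewrite cardW ?FC_None // -sum_const_ord; apply: eq_bigr => i _; rewrite FC_Fi.
apply: (@leq_bigmax_cond _ (fun F => rcK eW d F == rW) (fun F => #|F|)).
by rewrite hde decompC // ?hFG ?h0' ?HW.
Qed.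

End M.

Lemma sq_lt j a k : j < k -> a < k -> j != a -> (if j < a then j else j.-1) < k.-1.
Proof. case: (ltnP j a); lia. Qed.
Lemma sq_inj j j' a : j != a -> j' != a -> j != j' ->
  (if j < a then j else j.-1) != (if j' < a then j' else j'.-1).
Proof. case: (ltnP j a); case: (ltnP j' a); lia. Qed.

Section F.
Variables (T : finType) (e : rel T) (m : nat).
Hypotheses (sym : symmetric e) (irr : irreflexive e) (m0 : 0 < m).
Local Notation W := (option ('I_m * T)).
Local Notation eW := (windmill_rel m e).
Local Notation n := (chi e).

Lemma chiW : chi eW = n.+1.
Proof.
have [c0 hc0] := chi_ex irr.
apply/eqP; rewrite eqn_leq; apply/andP; split.
  exact: chi_min (dC_proper m hc0).
have [dW hdW] := chi_ex (irrW (m:=m) irr).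
move/propP: hdW => Hp.
pose i0 := Ordinal m0.
pose a := nat_of_ord (dW None).
pose col x := let j := nat_of_ord (dW (Some (i0, x))) in if j < a then j else j.-1.
have ne : forall x, nat_of_ord (dW (Some (i0, x))) != a.
  by move=> x; rewrite /a val_eqE eq_sym; apply: Hp.
have ha : a < chi eW := ltn_ord (dW None).
have : chi e <= (chi eW).-1.
  apply: (@chi_min_nat _ _ _ col).
    move=> x; apply: sq_lt => //; exact: ltn_ord.
  move=> x y exy; have := Hp (Some (i0, x)) (Some (i0, y)); rewrite /= ?eqxx exy => /(_ isT).
  rewrite -val_eqE /= => h; apply: sq_inj => //.
lia.
Qed.

Lemma fminW : f_minus eW = m * f_minus e.
Proof.
rewrite !f_minusE chiW.
have [c0 hc0] := chi_ex irr.
have [cG hcG hmin] := @bigmin_att _ (fun c : {ffun T -> 'I_n} => proper_col e c)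
   (fun c => rcK e c set0) #|T| c0 hc0 (fun c _ => rcK_le e c set0).
have hmin' : rminK e n = rcK e cG set0 := hmin.
have lbG : forall c : T -> 'I_n, proper_col e c -> rminK e n <= rcK e c set0.
  move=> c hc; have -> : rcK e c set0 = rcK e [ffun x => c x] set0.
    by apply: rcK_ext => x; rewrite ffunE.
  apply: (@bigmin_le _ (fun c : {ffun T -> 'I_n} => proper_col e c) (fun c => rcK e c set0)).
  by rewrite (proper_ext e (ffunE _)).
have hW : rminK eW n.+1 = 1 + m * rminK e n.
  apply/eqP; rewrite eqn_leq; apply/andP; split.
    have hp : proper_col eW [ffun w => dC cG w].
      by rewrite (proper_ext eW (ffunE _)); apply: dC_proper.
    apply: leq_trans (@bigmin_le _ (fun c : {ffun W -> 'I_n.+1} => proper_col eW c) (fun c => rcK eW c set0) _ _ hp) _.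
    rewrite (@rcK_ext _ _ _ _ (dC cG)); last by move=> w; rewrite ffunE.
    by rewrite (decompC0 sym m0 hc0) // hmin'.
  have hp0 : proper_col eW [ffun w => dC c0 w].
    by rewrite (proper_ext eW (ffunE _)); apply: dC_proper.
  have [dm hdm hdmin] := @bigmin_att _ (fun c : {ffun W -> 'I_n.+1} => proper_col eW c)
     (fun c => rcK eW c set0) _ _ hp0 (fun c _ => rcK_le eW c set0).
  have -> : rminK eW n.+1 = rcK eW dm set0 := hdmin.
  rewrite (decomp0 sym m0 hc0) // leq_add2l -sum_const_ord.
  by apply: leq_sum => i _; apply: lbG; apply: cof_proper.
apply: (assemble sym m0 (cdef:=c0)) => //.
  by exists cG; split.
move=> d hd; rewrite (decomp0 sym m0 hc0) // hW => /eqP; rewrite eqn_add2l => /eqP h.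
apply: sum_eq_ge; last by rewrite h.
by move=> i; apply: lbG; apply: cof_proper.
Qed.

Lemma fmaxW : f_plus eW = m * f_plus e.
Proof.
rewrite !f_plusE chiW.
have [c0 hc0] := chi_ex irr.
have [cG hcG hmax] := @bigmax_att _ (fun c : {ffun T -> 'I_n} => proper_col e c)
   (fun c => rcK e c set0) c0 hc0.
have hmax' : rmaxK e n = rcK e cG set0 := hmax.
have ubG : forall c : T -> 'I_n, proper_col e c -> rcK e c set0 <= rmaxK e n.
  move=> c hc; have -> : rcK e c set0 = rcK e [ffun x => c x] set0.
    by apply: rcK_ext => x; rewrite ffunE.
  apply: (@leq_bigmax_cond _ (fun c : {ffun T -> 'I_n} => proper_col e c) (fun c => rcK e c set0)).
  by rewrite (proper_ext e (ffunE _)).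
have hW : rmaxK eW n.+1 = 1 + m * rmaxK e n.
  apply/eqP; rewrite eqn_leq; apply/andP; split; last first.
    have hp : proper_col eW [ffun w => dC cG w].
      by rewrite (proper_ext eW (ffunE _)); apply: dC_proper.
    apply: leq_trans _ (@leq_bigmax_cond _ (fun c : {ffun W -> 'I_n.+1} => proper_col eW c) (fun c => rcK eW c set0) _ hp).
    rewrite (@rcK_ext _ _ _ _ (dC cG)); last by move=> w; rewrite ffunE.
    by rewrite (decompC0 sym m0 hc0) // hmax'.
  have hp0 : proper_col eW [ffun w => dC c0 w].
    by rewrite (proper_ext eW (ffunE _)); apply: dC_proper.
  have [dm hdm hdmax] := @bigmax_att _ (fun c : {ffun W -> 'I_n.+1} => proper_col eW c)
     (fun c => rcK eW c set0) _ hp0.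
  have -> : rmaxK eW n.+1 = rcK eW dm set0 := hdmax.
  rewrite (decomp0 sym m0 hc0) // leq_add2l -sum_const_ord.
  by apply: leq_sum => i _; apply: ubG; apply: cof_proper.
apply: (assemble sym m0 (cdef:=c0)) => //.
  by exists cG; split.
move=> d hd; rewrite (decomp0 sym m0 hc0) // hW => /eqP; rewrite eqn_add2l => /eqP h.
apply: sum_eq_le; last by rewrite h.
by move=> i; apply: ubG; apply: cof_proper.
Qed.

End F.

Unset Implicit Arguments.
Theorem mainTheorem10 (T : finType) (e : rel T) (m : nat) :
  symmetric e -> irreflexive e -> (forall x y : T, connect e x y) -> 0 < m ->
  f_minus (windmill_rel m e) = m * f_minus e /\
  f_plus (windmill_rel m e) = m * f_plus e.
Proof. move=> sym irr _ m0; split; [exact: fminW | exact: fmaxW]. Qed.
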